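(* Let $\mathcal{C}$, $\mathcal{F}$, $\prec$ be as in the context, let $\mathcal{Q}$ be a prime ideal of $\mathcal{C}$, let $h\in\mathcal{C}\smallsetminus\mathcal{Q}$, and let $g_1,\ldots,g_r\in\hat{\mathcal{D}}_n(\mathcal{C}[h^{-1}])\langle z\rangle\smallsetminus\hat{\mathcal{D}}_n(\mathcal{Q}[h^{-1}])\langle z\rangle$ be such that for each $j$ the numerator of $\mathrm{lc}^{\mathrm{mod}\mathcal{Q}}(g_j)$ divides $h$ in $\mathcal{C}$. Let $\Delta_1\cup\cdots\cup\Delta_r\cup\bar\Delta$ be the partition of $\mathbb{N}^{2n+1}$ associated with $e_j=\exp^{\mathrm{mod}\mathcal{Q}}(g_j)$, i.e. $\Delta_1=e_1+\mathbb{N}^{2n+1}$, $\Delta_j=(e_j+\mathbb{N}^{2n+1})\smallsetminus\bigcup_{k<j}\Delta_k$ for $j\ge2$, and $\bar\Delta=\mathbb{N}^{2n+1}\smallsetminus\bigcup_j\Delta_j$. Then for every $P\in\hat{\mathcal{D}}_n(\mathcal{C}[h^{-1}])\langle z\rangle$ there exist $q_1,\ldots,q_r,R,T\in\hat{\mathcal{D}}_n(\mathcal{F})\langle z\rangle$ such that (o) $P=\sum_j q_jg_j+R+T$; (i) if $q_j\neq0$ then $\mathrm{Supp}(q_j)+\exp^{\mathrm{mod}\mathcal{Q}}(g_j)\subset\Delta_j$; (ii) if $R\ne0$ then $\mathrm{Supp}(R)\subset\bar\Delta$; (iii) $q_1,\ldots,q_r,R\in\hat{\mathcal{D}}_n(\mathcal{C}[h^{-1}])\langle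 z\rangle$ and $T\in\hat{\mathcal{D}}_n(\mathcal{Q}[h^{-1}])\langle z\rangle$. Moreover $(q_1,\ldots,q_r,R)$ is unique modulo $\hat{\mathcal{D}}_n(\mathcal{Q}[h^{-1}])\langle z\rangle$: for any two such tuples, the differences of corresponding components lie in $\hat{\mathcal{D}}_n(\mathcal{Q}[h^{-1}])\langle z\rangle$.
   Context: $x=(x_1,\ldots,x_n)$. For a commutative ring $A$, $\hat{\mathcal{D}}_n(A)\langle z\rangle$ is the $A[[x]]$-algebra generated by $\partial_{x_1},\ldots,\partial_{x_n}$ and a central variable $z$, with commuting $\partial_{x_i}$ and $[\partial_{x_i},a]=\frac{\partial a}{\partial x_i}z$ for $a\in A[[x]]$; each element is written uniquely $P=\sum c_{\alpha\beta k}x^\alpha\partial_x^\beta z^k$ ($c_{\alpha\beta k}\in A$), and $\mathrm{Supp}(P)=\{(\alpha,\beta,k)\in\mathbb{N}^{2n+1}: c_{\alpha\beta k}\neq0\}$. $\mathcal{C}$ is a commutative integral domain with $1$ (not necessarily noetherian) such that no nonzero integer lies in a prime ideal of $\mathcal{C}$; $\mathcal{F}=\mathrm{Frac}(\mathcal{C})$. For a subring $A\subset\mathcal{F}$, $\hat{\mathcal{D}}_n(A)\langle z\rangle$ is viewed inside $\hat{\mathcal{D}}_n(\mathcal{F})\langle z\rangle$. For $h\in\mathcal{C}$, $\mathcal{C}[h^{-1}]$ is the localization, and $\hat{\mathcal{D}}_n(\mathcal{Q}[h^{-1}])\langle z\rangle$ is the set of elements of $\hat{\mathcal{D}}_n(\mathcal{C}[h^{-1}])\langle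 z\rangle$ all of whose coefficients are of the form $c/h^l$ with $c\in\mathcal{Q}$. $\mathcal{C}_\mathcal{Q}$ is the localization at $\mathcal{Q}$, and $\langle\mathcal{Q}\rangle$ is the set of elements of $\hat{\mathcal{D}}_n(\mathcal{F})\langle z\rangle$ whose coefficients are $c/c'$ with $c\in\mathcal{Q}$. An admissible order $\prec$ is a total order on $\mathbb{N}^{2n}$ compatible with addition (a monomial order on monomials $x^\alpha\xi^\beta$) with $x_i\prec1$ and $x_i\xi_i\succ1$ for all $i$. $\prec^h$ on $\mathbb{N}^{2n+1}$: $(\alpha,\beta,k)\prec^h(\alpha',\beta',k')$ iff $|\beta|+k<|\beta'|+k'$, or equality and $(\alpha,\beta)\prec(\alpha',\beta')$. Fix an admissible $\prec$; all maxima below are for $\prec^h$. For $P\in\hat{\mathcal{D}}_n(\mathcal{C}_\mathcal{Q})\langle z\rangle\smallsetminus\langle\mathcal{Q}\rangle$, write its coefficients as $c_{\alpha\beta k}/c'_{\alpha\beta k}$ with $c'_{\alpha\beta k}\notin\mathcal{Q}$; $\exp^{\mathrm{mod}\mathcal{Q}}(P)$ is the $\prec^h$-maximum of the $(\alpha,\beta,k)$ with $c_{\alpha\beta k}\notin\mathcal{Q}$, $\mathrm{lc}^{\mathrm{mod}\mathcal{Q}}(P)$ is the coefficient $c/c'$ of $P$ at that exponent (its numerator is $c$), and $\mathrm{lm}^{\mathrm{mod}\mathcal{Q}}(P)$ is the corresponding term. *)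

(* Defs.v *)
From HB Require Import structures.
From mathcomp Require Import all_boot all_order all_algebra.
Set Implicit Arguments. Unset Strict Implicit. Unset Printing Implicit Defensive.
Import Order.TTheory GRing.Theory Num.Theory.
Local Open Scope ring_scope.

(* Multi-indices and exponents (alpha, beta, k) in N^(2n+1).               *)
Definition mi (n : nat) := {ffun 'I_n -> nat}.
Definition expo (n : nat) := (mi n * mi n * nat)%type.

Definition mi_add n (a b : mi n) : mi n := [ffun i => (a i + b i)%N].
Definition mi_sub n (a b : mi n) : mi n := [ffun i => (a i - b i)%N].
Definition mi_le n (a b : mi n) : bool := [forall i, (a i <= b i)%N].
Definition mi_abs n (a : mi n) : nat := (\sum_(i < n) a i)%N.
Definition mi0 n : mi n := [ffun _ => 0%N].
Definition mi_unit n (j : 'I_n) : mi n := [ffun i => (i == j : nat)].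

Definition expo_add n (e f : expo n) : expo n :=
  (mi_add e.1.1 f.1.1, mi_add e.1.2 f.1.2, (e.2 + f.2)%N).
(* e <= f componentwise, i.e. f \in e + N^(2n+1) *)
Definition expo_le n (e f : expo n) : bool :=
  [&& mi_le e.1.1 f.1.1, mi_le e.1.2 f.1.2 & (e.2 <= f.2)%N].

(* Admissible orders on N^(2n) (pairs (alpha, beta) = monomial x^a xi^b),  *)
Definition admissible n (lt : mi n * mi n -> mi n * mi n -> bool) : Prop :=
  [/\ (forall a, ~~ lt a a),
      (forall a b c, lt a b -> lt b c -> lt a c),
      (forall a b, a <> b -> lt a b \/ lt b a),
      (forall a b c, lt a b ->
          lt (mi_add a.1 c.1, mi_add a.2 c.2) (mi_add b.1 c.1, mi_add b.2 c.2))
    & (forall i : 'I_n, lt (mi_unit i, mi0 n) (mi0 n, mi0 n) /\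
                        lt (mi0 n, mi0 n) (mi_unit i, mi_unit i))].

Definition hlt n (lt : mi n * mi n -> mi n * mi n -> bool) (e f : expo n) : bool :=
  ((mi_abs e.1.2 + e.2 < mi_abs f.1.2 + f.2)%N) ||
  ((mi_abs e.1.2 + e.2 == mi_abs f.1.2 + f.2)%N && lt e.1 f.1).

Definition hle n lt (e f : expo n) : bool := (e == f) || hlt lt e f.

Section Coef.
Variable C : idomainType.
Local Notation F := {fraction C}.
Local Notation "x %:F" := (@FracField.tofrac C x).

Definition prime_ideal (Q : pred C) : Prop :=
  [/\ 0 \in Q,
      (forall a b, a \in Q -> b \in Q -> a + b \in Q),
      (forall a b, b \in Q -> a * b \in Q),
      1 \notin Q
    & (forall a b, a * b \in Q -> (a \in Q) \/ (b \in Q))].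

Definition no_int_in_primes : Prop :=
  forall Q : pred C, prime_ideal Q -> forall m : int, m%:~R \in Q -> m = 0.

Definition locC (h : C) (f : F) : Prop :=
  exists (c : C) (l : nat), f = c%:F / (h ^+ l)%:F.
Definition locQ (Q : pred C) (h : C) (f : F) : Prop :=
  exists (c : C) (l : nat), c \in Q /\ f = c%:F / (h ^+ l)%:F.
Definition locCQ (Q : pred C) (f : F) : Prop :=
  exists c c' : C, c' \notin Q /\ f = c%:F / c'%:F.
Definition locQQ (Q : pred C) (f : F) : Prop :=
  exists c c' : C, [/\ c \in Q, c' \notin Q & f = c%:F / c'%:F].
End Coef.

(* Operators: P = sum c_{a b k} x^a d^b z^k, encoded by its coefficient    *)
(* function.  P lies in D_n(A)<z> iff all coefficients are in A and P is   *)
(* polynomial in (d, z) (finitely many (b,k) occur).                       *)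
Definition op (R : Type) (n : nat) := expo n -> R.

Definition Supp (R : nzRingType) n (P : op R n) : expo n -> Prop :=
  fun e => P e != 0.

Definition inD (R : nzRingType) n (A : R -> Prop) (P : op R n) : Prop :=
  (exists N : nat, forall e : expo n, P e != 0 -> (mi_abs e.1.2 + e.2 <= N)%N)
  /\ (forall e, A (P e)).

Definition op_sub (R : nzRingType) n (P Q : op R n) : op R n := fun e => P e - Q e.

(* Product in D_n(A)<z>, from  d^b x^g = sum_{m <= b} C(b,m) g^_m x^(g-m) z^|m| d^(b-m):
   coefficient of x^A d^D z^M in P*Q is the sum over (m, a, d, k) of
   P(a, D - d + m, k) * Q(A - a + m, d, M - k - |m|) * C(D-d+m, m) * (A-a+m)^_m
   with a <= A, d <= D, |m| + k <= M (all these indices are bounded). *)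
Definition bnd n (B : nat) := {ffun 'I_n -> 'I_B.+1}.
Definition bval n B (a : bnd n B) : mi n := [ffun i => nat_of_ord (a i)].

Definition mi_binom n (b m : mi n) : nat := (\prod_(i < n) 'C(b i, m i))%N.
Definition mi_ffact n (g m : mi n) : nat := (\prod_(i < n) (g i) ^_ (m i))%N.

Definition op_mul (R : nzRingType) n (P Q : op R n) : op R n :=
  fun e =>
  let A := e.1.1 in let D := e.1.2 in let M := e.2 in
  let B := (M + mi_abs A + mi_abs D)%N in
  \sum_(m : bnd n B) \sum_(a : bnd n B) \sum_(d : bnd n B) \sum_(k < M.+1)
    let mu := bval m in let al := bval a in let de := bval d in
    if [&& mi_le al A, mi_le de D & (mi_abs mu + k <= M)%N] then
      let be := mi_add (mi_sub D de) mu in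
      let ga := mi_add (mi_sub A al) mu in
      P (al, be, nat_of_ord k) * Q (ga, de, (M - k - mi_abs mu)%N)
        * (mi_binom be mu)%:R * (mi_ffact ga mu)%:R
    else 0.

Definition is_expmodQ (C : idomainType) n lt (Q : pred C) (P : op {fraction C} n)
    (e : expo n) : Prop :=
  ~ locQQ Q (P e) /\ (forall f, ~ locQQ Q (P f) -> hle lt f e).

Definition inDelta n r (es : 'I_r -> expo n) (j : 'I_r) (e : expo n) : Prop :=
  expo_le (es j) e /\ (forall k : 'I_r, (k < j)%N -> ~~ expo_le (es k) e).
Definition inDeltabar n r (es : 'I_r -> expo n) (e : expo n) : Prop :=
  forall k : 'I_r, ~~ expo_le (es k) e.

Definition division_data (C : idomainType) n r (Q : pred C) (h : C)
    (g : 'I_r -> op {fraction C} n) (es : 'I_r -> expo n)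
    (P : op {fraction C} n)
    (q : 'I_r -> op {fraction C} n) (R T : op {fraction C} n) : Prop :=
  [/\ (forall j, inD (fun _ => True) (q j)) /\ inD (fun _ => True) R
        /\ inD (fun _ => True) T,
      (forall e, P e = \sum_(j < r) op_mul (q j) (g j) e + R e + T e),
      (forall j : 'I_r, forall s, Supp (q j) s -> inDelta es j (expo_add s (es j))),
      (forall s, Supp R s -> inDeltabar es s)
    &
      [/\ (forall j, inD (locC h) (q j)), inD (locC h) R & inD (locQ Q h) T]].

(* Main.v *)
Require Import Defs.
From HB Require Import structures.
From mathcomp Require Import all_boot all_order all_algebra.
From mathcomp Require Import zify ring.
From Stdlib Require Import Classical ClassicalEpsilon.
Set Implicit Arguments. Unset Strict Implicit. Unset Printing Implicit Defensive.
Import GRing.Theory.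

Section Arith.
Variable n : nat.
Implicit Types a b c : mi n.

Lemma mi_addC a b : mi_add a b = mi_add b a.
Proof. by apply/ffunP=> i; rewrite !ffunE addnC. Qed.
Lemma mi_addA a b c : mi_add a (mi_add b c) = mi_add (mi_add a b) c.
Proof. by apply/ffunP=> i; rewrite !ffunE addnA. Qed.
Lemma mi_add0 a : mi_add a (mi0 n) = a.
Proof. by apply/ffunP=> i; rewrite !ffunE addn0. Qed.
Lemma mi_0add a : mi_add (mi0 n) a = a.
Proof. by apply/ffunP=> i; rewrite !ffunE add0n. Qed.
Lemma mi_abs_add a b : mi_abs (mi_add a b) = (mi_abs a + mi_abs b)%N.
Proof. by rewrite /mi_abs -big_split; apply: eq_bigr=> i _; rewrite ffunE. Qed.
Lemma mi_abs0 : mi_abs (mi0 n) = 0%N.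
Proof. by rewrite /mi_abs big1 // => i _; rewrite ffunE. Qed.
Lemma mi_abs_eq0 a : mi_abs a = 0%N -> a = mi0 n.
Proof.
move=> H; apply/ffunP=> i; rewrite ffunE; apply/eqP; rewrite -leqn0.
by rewrite -H /mi_abs (bigD1 i) //= leq_addr.
Qed.
Lemma mi_le_abs a i : (a i <= mi_abs a)%N.
Proof. by rewrite /mi_abs (bigD1 i) //= leq_addr. Qed.
Lemma mi_subK a b : mi_le b a -> mi_add (mi_sub a b) b = a.
Proof. move=> /forallP H; apply/ffunP=> i; rewrite !ffunE subnK //. Qed.
Lemma mi_addK a b : mi_sub (mi_add a b) b = a.
Proof. by apply/ffunP=> i; rewrite !ffunE addnK. Qed.
Lemma mi_le_addl a b : mi_le b (mi_add a b).
Proof. by apply/forallP=> i; rewrite ffunE leq_addl. Qed.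
Lemma mi_le_refl a : mi_le a a.
Proof. by apply/forallP=> i. Qed.
Lemma mi_le_trans a b c : mi_le a b -> mi_le b c -> mi_le a c.
Proof. move=> /forallP H1 /forallP H2; apply/forallP=> i; exact: leq_trans (H1 i) (H2 i). Qed.
Lemma mi_le_anti a b : mi_le a b -> mi_le b a -> a = b.
Proof.
move=> /forallP H1 /forallP H2; apply/ffunP=> i; apply/eqP; rewrite eqn_leq H1 H2 //.
Qed.

Definition deg (e : expo n) := (mi_abs e.1.2 + e.2)%N.
Definition expo_sub (e f : expo n) : expo n :=
  (mi_sub e.1.1 f.1.1, mi_sub e.1.2 f.1.2, (e.2 - f.2)%N).

Lemma deg_add (e f : expo n) : deg (expo_add e f) = (deg e + deg f)%N.
Proof. rewrite /deg /expo_add /= mi_abs_add; lia. Qed.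

Lemma expo_subK (e f : expo n) : expo_le f e -> expo_add (expo_sub e f) f = e.
Proof.
case/and3P=> H1 H2 H3; case: e H1 H2 H3 => [[a b] k]; case: f => [[a' b'] k'] /= H1 H2 H3.
rewrite /expo_add /expo_sub /= !mi_subK // subnK //.
Qed.
Lemma expo_addK (e f : expo n) : expo_sub (expo_add e f) f = e.
Proof.
case: e => [[a b] k]; case: f => [[a' b'] k'].
by rewrite /expo_add /expo_sub /= !mi_addK addnK.
Qed.
Lemma expo_le_add (e f : expo n) : expo_le f (expo_add e f).
Proof. by rewrite /expo_le /expo_add /= !mi_le_addl leq_addl. Qed.
Lemma expo_addC (e f : expo n) : expo_add e f = expo_add f e.
Proof. by rewrite /expo_add mi_addC (mi_addC e.1.2) addnC. Qed.
Lemma expo_addA (e f g : expo n) : expo_add e (expo_add f g) = expo_add (expo_add e f) g.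
Proof. by rewrite /expo_add /= !mi_addA addnA. Qed.
Lemma expo_le_anti (e f : expo n) : expo_le e f -> expo_le f e -> e = f.
Proof.
case: e => [[a b] k]; case: f => [[a' b'] k'] /and3P[/= H1 H2 H3] /and3P[/= H4 H5 H6].
by rewrite (mi_le_anti H1 H4) (mi_le_anti H2 H5) (_ : k = k') //; lia.
Qed.
Lemma expo_le_trans (e f g : expo n) : expo_le e f -> expo_le f g -> expo_le e g.
Proof.
case/and3P=> H1 H2 H3 /and3P[H4 H5 H6]; apply/and3P; split.
- exact: mi_le_trans H4.
- exact: mi_le_trans H5.
- exact: leq_trans H6.
Qed.
End Arith.

Section Ord.
Variable n : nat.
Variable lt : mi n * mi n -> mi n * mi n -> bool.
Hypothesis adm : admissible lt.

Definition padd (a b : mi n * mi n) := (mi_add a.1 b.1, mi_add a.2 b.2).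

Lemma lt_irr a : ~~ lt a a. Proof. by case: adm. Qed.
Lemma lt_trans a b c : lt a b -> lt b c -> lt a c. Proof. case: adm=> _ H _ _ _; exact: H. Qed.
Lemma lt_total a b : a <> b -> lt a b \/ lt b a. Proof. case: adm=> _ _ H _ _; exact: H. Qed.
Lemma lt_comp a b c : lt a b -> lt (padd a c) (padd b c). Proof. case: adm=> _ _ _ H _; exact: H. Qed.
Lemma lt_units (i : 'I_n) : lt (mi_unit i, mi0 n) (mi0 n, mi0 n) /\
                        lt (mi0 n, mi0 n) (mi_unit i, mi_unit i).
Proof. by case: adm=> _ _ _ _ H. Qed.

Lemma lt_asym a b : lt a b -> lt b a -> False.
Proof. by move=> H1 H2; move: (lt_irr a); rewrite (lt_trans H1 H2). Qed.

Lemma lt_cancel a b c : lt (padd a c) (padd b c) -> lt a b.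
Proof.
move=> H; case: (eqVneq a b) => [E|/eqP Hne].
  by subst; move: (lt_irr (padd b c)); rewrite H.
case: (lt_total Hne) => // H2; exfalso; exact: lt_asym H (lt_comp c H2).
Qed.

Lemma mi_induct (P : mi n -> Prop) :
  (forall i, P (mi_unit i)) -> (forall a b, P a -> P b -> P (mi_add a b)) ->
  forall a, a <> mi0 n -> P a.
Proof.
move=> Hu Hadd a; move Ek: (mi_abs a) => k; elim: k a Ek => [|k IH] a Ek Ha.
  by case: Ha; apply: mi_abs_eq0.
case: (pickP (fun i => 0 < a i)%N) => [i Hi|H0]; last first.
  case: Ha; apply/ffunP=> i; rewrite ffunE; move: (H0 i); rewrite /= lt0n => /negbFE/eqP //.
have Hle : mi_le (mi_unit i) a.
  by apply/forallP=> j; rewrite ffunE; case: eqP => [->|] //=.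
rewrite -(mi_subK Hle).
have Habs : mi_abs (mi_sub a (mi_unit i)) = k.
  have := f_equal (@mi_abs n) (mi_subK Hle); rewrite mi_abs_add Ek.
  suff -> : mi_abs (mi_unit i) = 1%N by lia.
  by rewrite /mi_abs (bigD1 i) //= big1 ?ffunE ?eqxx // => j Hj; rewrite ffunE (negbTE Hj).
case: (eqVneq (mi_sub a (mi_unit i)) (mi0 n)) => [->|/eqP Hne].
  by rewrite mi_0add.
exact: Hadd (IH _ Habs Hne) (Hu i).
Qed.

Lemma lt_diag mu : mu <> mi0 n -> lt (mi0 n, mi0 n) (mu, mu).
Proof.
move: mu; apply: (@mi_induct (fun mu => lt (mi0 n, mi0 n) (mu, mu))) => [i|a b Ha Hb]; first by case: (lt_units i).
apply: lt_trans Hb _.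
have := lt_comp (b, b) Ha; rewrite /padd /= !mi_0add (mi_addC a) //.
Qed.

Lemma lt_xneg g : g <> mi0 n -> lt (g, mi0 n) (mi0 n, mi0 n).
Proof.
move: g; apply: (@mi_induct (fun g => lt (g, mi0 n) (mi0 n, mi0 n))) => [i|a b Ha Hb]; first by case: (lt_units i).
apply: lt_trans _ Hb.
have := lt_comp (b, mi0 n) Ha; rewrite /padd /= !mi_0add (mi_addC a) /=; rewrite ?mi_add0 ?mi_0add //.
Qed.

Notation hlt := (hlt lt).
Notation hle := (hle lt).

Lemma hlt_irr e : ~~ hlt e e.
Proof. by rewrite /hlt ltnn eqxx /= lt_irr. Qed.

Lemma hlt_deg e f : hlt e f -> (deg e <= deg f)%N.
Proof. by rewrite /hlt /deg => /orP[/ltnW|/andP[/eqP-> _]]. Qed.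

Lemma hlt_trans e f g : hlt e f -> hlt f g -> hlt e g.
Proof.
rewrite /hlt => /orP[H1|/andP[/eqP E1 L1]] /orP[H2|/andP[/eqP E2 L2]].
- by rewrite (ltn_trans H1 H2).
- by rewrite -E2 H1.
- by rewrite E1 H2.
- by rewrite E1 E2 eqxx (lt_trans L1 L2) orbT.
Qed.

Lemma hlt_asym e f : hlt e f -> hlt f e -> False.
Proof. by move=> H1 H2; move: (hlt_irr e); rewrite (hlt_trans H1 H2). Qed.

Lemma hlt_total e f : e <> f -> hlt e f \/ hlt f e.
Proof.
move=> Hne; rewrite /hlt.
case: (ltngtP (mi_abs e.1.2 + e.2) (mi_abs f.1.2 + f.2)) => H; [by left|by right|].
rewrite ?eqxx /=.
case: (eqVneq e.1 f.1) => [E1|/eqP Hne1]; last exact: lt_total.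
exfalso; apply: Hne; move: H; rewrite E1.
case: e E1 => [[a b] k]; case: f => [[a' b'] k'] /= [-> ->] H.
by congr (_,_); lia.
Qed.

Lemma hlt_add e f c : hlt e f -> hlt (expo_add e c) (expo_add f c).
Proof.
rewrite /hlt /expo_add /= !mi_abs_add => /orP[H|/andP[/eqP E L]].
  by apply/orP; left; lia.
apply/orP; right; apply/andP; split; first by apply/eqP; lia.
exact: (lt_comp c.1 L).
Qed.

Lemma hle_add e f c : hle e f -> hle (expo_add e c) (expo_add f c).
Proof. by rewrite /hle => /orP[/eqP->|H]; rewrite ?eqxx // (hlt_add c H) orbT. Qed.

Lemma hle_hlt_trans e f g : hle e f -> hlt f g -> hlt e g.
Proof. by rewrite /hle => /orP[/eqP->|H1] // H2; apply: hlt_trans H1 H2. Qed.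
Lemma hlt_hle_trans e f g : hlt e f -> hle f g -> hlt e g.
Proof. by rewrite /hle => H1 /orP[/eqP<-|H2] //; apply: hlt_trans H1 H2. Qed.

(* the shifted exponent appearing in products *)
Definition shift (e : expo n) (mu : mi n) : expo n :=
  (mi_add e.1.1 mu, mi_add e.1.2 mu, (e.2 - mi_abs mu)%N).

Lemma shift0 e : shift e (mi0 n) = e.
Proof. by case: e => [[a b] k]; rewrite /shift /= !mi_add0 mi_abs0 subn0. Qed.

Lemma deg_shift e mu : (mi_abs mu <= e.2)%N -> deg (shift e mu) = deg e.
Proof. by rewrite /deg /shift /= mi_abs_add; lia. Qed.

Lemma hlt_shift e mu : (mi_abs mu <= e.2)%N -> mu <> mi0 n -> hlt e (shift e mu).
Proof.
move=> Hm Hmu; rewrite /hlt; apply/orP; right.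
have := deg_shift Hm; rewrite /deg => ->; rewrite eqxx /=.
have := lt_comp e.1 (lt_diag Hmu); rewrite /padd /= !mi_0add (mi_addC mu) (mi_addC mu).
by case: e {Hm} => [[a b] k].
Qed.

Lemma hle_shift e mu : (mi_abs mu <= e.2)%N -> hle e (shift e mu).
Proof.
move=> Hm; case: (eqVneq mu (mi0 n)) => [->|/eqP H]; first by rewrite shift0 /hle eqxx.
by rewrite /hle (hlt_shift Hm H) orbT.
Qed.

Lemma hle_x e g : hle (mi_add e.1.1 g, e.1.2, e.2) e.
Proof.
case: (eqVneq g (mi0 n)) => [->|/eqP H].
  by rewrite mi_add0 /hle; case: e => [[a b] k]; rewrite eqxx.
rewrite /hle /hlt /=; apply/orP; right; rewrite eqxx ltnn /=.
have := lt_comp e.1 (lt_xneg H); rewrite /padd /= !mi_0add (mi_addC g).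
by case: e => [[a b] k].
Qed.

End Ord.

Definition incr (psi : nat -> nat) := forall k, (psi k < psi k.+1)%N.

Lemma incr_mono psi : incr psi -> forall a b, (a <= b)%N -> (psi a <= psi b)%N.
Proof.
move=> H a b /subnK <-; elim: (b - a)%N => [|d IH] //=.
by rewrite addSn; apply: leq_trans IH (ltnW (H _)).
Qed.

Lemma incr_strict psi : incr psi -> forall a b, (a < b)%N -> (psi a < psi b)%N.
Proof. by move=> H a b Hab; apply: leq_trans (H a) (incr_mono H Hab). Qed.

Lemma min_after (g : nat -> nat) p :
  exists i, (p < i)%N /\ forall j, (p < j)%N -> (g i <= g j)%N.
Proof.
suff: forall v, (exists j, (p < j)%N /\ g j = v) ->
  exists i, (p < i)%N /\ forall j, (p < j)%N -> (g i <= g j)%N.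
  by apply; exists p.+1.
elim/ltn_ind => v IH [j0 [Hj0 Ev]].
case: (classic (exists j, (p < j)%N /\ (g j < v)%N)) => [[j [Hj Hlt]]|Hno].
  by apply: (IH (g j)) => //; exists j.
exists j0; split=> // j Hj; rewrite Ev leqNgt; apply/negP=> Hl; apply: Hno; by exists j.
Qed.

Lemma single_sub (g : nat -> nat) :
  exists psi, incr psi /\ forall k, (g (psi k) <= g (psi k.+1))%N.
Proof.
have H := fun p => constructive_indefinite_description _ (min_after g p).
pose nxt p := proj1_sig (H p).
have Hn1 p : (p < nxt p)%N by rewrite /nxt; case: (H p) => /= i [].
have Hn2 p j : (p < j)%N -> (g (nxt p) <= g j)%N by move=> Hj; rewrite /nxt; case: (H p) => /= i [_ Hi]; apply: Hi.
pose psi := fix psi k := if k is k'.+1 then nxt (psi k') else nxt 0%N.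
exists psi; split=> [k|k] /=; first exact: Hn1.
case: k => [|k] /=.
- apply: Hn2; apply: ltn_trans (Hn1 _); done.
- apply: Hn2; apply: ltn_trans (Hn1 _); exact: Hn1.
Qed.

Lemma mono_of_consec (u : nat -> nat) :
  (forall k, (u k <= u k.+1)%N) -> forall a b, (a <= b)%N -> (u a <= u b)%N.
Proof.
move=> H a b /subnK <-; elim: (b - a)%N => [|d IH] //=.
by rewrite addSn; apply: leq_trans IH (H _).
Qed.

Lemma dickson_seq (X : Type) (I : eqType) (c : I -> X -> nat) (s : seq I) (f : nat -> X) :
  exists psi, incr psi /\
    forall i, i \in s -> forall a b, (a <= b)%N -> (c i (f (psi a)) <= c i (f (psi b)))%N.
Proof.
elim: s => [|i0 s [psi [Hpsi Hmono]]].
  by exists id; split=> // k.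
have [phi [Hphi Hc]] := single_sub (fun k => c i0 (f (psi k))).
exists (fun k => psi (phi k)); split.
  by move=> k; apply: incr_strict.
move=> i; rewrite inE => /orP[/eqP->|Hi] a b Hab.
  exact: (mono_of_consec Hc Hab).
by apply: Hmono => //; apply: incr_mono.
Qed.

Lemma wf_of_nochain (T : Type) (R : T -> T -> Prop) :
  (forall f : nat -> T, ~ (forall k, R (f k.+1) (f k))) -> well_founded R.
Proof.
move=> Hno x; apply: NNPP => Hx.
have step : forall y : {y | ~ Acc R y}, {z : {z | ~ Acc R z} | R (proj1_sig z) (proj1_sig y)}.
  move=> [y Hy]; apply: constructive_indefinite_description.
  apply: NNPP => Hn; apply: (Hy); constructor => z Rz; apply: NNPP => Hz.
  by apply: Hn; exists (exist _ z Hz).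
pose f := fix f k : {y | ~ Acc R y} :=
  if k is k'.+1 then proj1_sig (step (f k')) else exist _ x Hx.
apply: (Hno (fun k => proj1_sig (f k))) => k /=.
by case: (step (f k)).
Qed.

Section WF.
Variable n : nat.
Variable lt : mi n * mi n -> mi n * mi n -> bool.
Hypothesis adm : admissible lt.

Definition coordI N (i : ('I_n * 'I_3) + bool) (e : expo n) : nat :=
  match i with
  | inl (j, t) => if nat_of_ord t == 0%N then e.1.1 j
                  else if nat_of_ord t == 1%N then e.1.2 j else (N - e.1.2 j)%N
  | inr b => if b then e.2 else (N - e.2)%N
  end.

Lemma wf_bounded N : well_founded (fun y x : expo n => hlt lt x y /\ (deg y <= N)%N).
Proof.
apply: wf_of_nochain => f Hf.
pose f' k := f k.+1.
have Hch : forall a b, (a < b)%N -> hlt lt (f' a) (f' b).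
  move=> a b /subnK <-; elim: (b - a.+1)%N => [|d IH]; first by case: (Hf a.+1).
  rewrite addSn; apply: (hlt_trans adm IH); rewrite /f'; case: (Hf (d + a.+1).+1) => //.
have Hdeg k : (deg (f' k) <= N)%N by case: (Hf k).
have [psi [Hpsi Hmono]] := dickson_seq (coordI N) (enum ((('I_n * 'I_3) + bool)%type : finType)) f'.
pose a := f' (psi 0%N); pose b := f' (psi 1%N).
have Hab : hlt lt a b by apply: Hch; apply: Hpsi.
have Hc i : (coordI N i a <= coordI N i b)%N by apply: Hmono; rewrite ?mem_enum.
have Hda := Hdeg (psi 0%N); have Hdb := Hdeg (psi 1%N).
rewrite -/a in Hda; rewrite -/b in Hdb.
have Hbeta : b.1.2 = a.1.2.
  apply/ffunP=> j; have := Hc (inl (j, Ordinal (isT : 1 < 3)%N)); have := Hc (inl (j, Ordinal (isT : 2 < 3)%N)).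
  have := mi_le_abs a.1.2 j; have := mi_le_abs b.1.2 j; move: Hda Hdb; rewrite /deg /coordI /=.
  lia.
have Hk : b.2 = a.2.
  have := Hc (inr true); have := Hc (inr false); move: Hda Hdb; rewrite /deg /coordI /=; lia.
have Hal : mi_le a.1.1 b.1.1.
  by apply/forallP=> j; have := Hc (inl (j, Ordinal (isT : 0 < 3)%N)).
have Eb : b = (mi_add a.1.1 (mi_sub b.1.1 a.1.1), a.1.2, a.2).
  by rewrite mi_addC mi_subK // -Hbeta -Hk; case: (b) => [[? ?] ?].
have := hle_x adm a (mi_sub b.1.1 a.1.1); rewrite -Eb => Hba.
by move: (hlt_irr adm b); rewrite (hle_hlt_trans adm Hba Hab).
Qed.

Lemma exists_max N (S : expo n -> Prop) :
  (forall e, S e -> (deg e <= N)%N) -> forall e0, S e0 ->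
  exists e, S e /\ forall f, S f -> ~~ hlt lt e f.
Proof.
move=> HN e0; elim/(well_founded_ind (wf_bounded N)): e0 => e IH Se.
case: (classic (exists f, S f /\ hlt lt e f)) => [[f [Sf Hf]]|Hno].
  by apply: (IH f) => //; split=> //; apply: HN.
exists e; split=> // f Sf; apply/negP=> Hf; apply: Hno; by exists f.
Qed.
End WF.
Local Open Scope ring_scope.

Section Gmul.
Variable R : nzRingType.
Variable n : nat.

Definition gmul (Phi : expo n -> expo n -> mi n -> R) (e : expo n) : R :=
  let A := e.1.1 in let D := e.1.2 in let M := e.2 in
  let B := (M + mi_abs A + mi_abs D)%N in
  \sum_(m : bnd n B) \sum_(a : bnd n B) \sum_(d : bnd n B) \sum_(k < M.+1)
    let mu := bval m in let al := bval a in let de := bval d in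
    if [&& mi_le al A, mi_le de D & (mi_abs mu + k <= M)%N] then
      let be := mi_add (mi_sub D de) mu in
      let ga := mi_add (mi_sub A al) mu in
      Phi (al, be, nat_of_ord k) (ga, de, (M - k - mi_abs mu)%N) mu
        * (mi_binom be mu)%:R * (mi_ffact ga mu)%:R
    else 0.

Lemma op_mul_gmul (P Q : op R n) e : op_mul P Q e = gmul (fun s t _ => P s * Q t) e.
Proof. by []. Qed.

Definition relx (e s t : expo n) (mu : mi n) :=
  expo_add s t = shift e mu /\ (mi_abs mu <= e.2)%N.

Lemma idx_relx (e : expo n) (mu al de : mi n) (k : nat) :
  [&& mi_le al e.1.1, mi_le de e.1.2 & (mi_abs mu + k <= e.2)%N] ->
  relx e (al, mi_add (mi_sub e.1.2 de) mu, k)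
         (mi_add (mi_sub e.1.1 al) mu, de, (e.2 - k - mi_abs mu)%N) mu.
Proof.
case/and3P=> /forallP H1 /forallP H2 H3; split; last by lia.
rewrite /expo_add /shift /=; congr (_, _, _); last by lia.
- by apply/ffunP=> i; rewrite !ffunE; have := H1 i; lia.
- by apply/ffunP=> i; rewrite !ffunE; have := H2 i; lia.
Qed.

Lemma gmul_ext (Phi1 Phi2 : expo n -> expo n -> mi n -> R) e :
  (forall s t mu, relx e s t mu -> Phi1 s t mu = Phi2 s t mu) -> gmul Phi1 e = gmul Phi2 e.
Proof.
move=> H; apply: eq_bigr=> m _; apply: eq_bigr=> a _; apply: eq_bigr=> d _; apply: eq_bigr=> k _.
by rewrite /=; case: ifP => // Hc; rewrite H //; apply: idx_relx.
Qed.

Lemma gmulD (Phi1 Phi2 : expo n -> expo n -> mi n -> R) e :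
  gmul (fun s t mu => Phi1 s t mu + Phi2 s t mu) e = gmul Phi1 e + gmul Phi2 e.
Proof.
rewrite /gmul -big_split; apply: eq_bigr=> m _; rewrite -big_split; apply: eq_bigr=> a _.
rewrite -big_split; apply: eq_bigr=> d _; rewrite -big_split; apply: eq_bigr=> k _ /=.
by case: ifP; rewrite ?addr0 // => _; rewrite !mulrDl.
Qed.

Lemma gmulN (Phi : expo n -> expo n -> mi n -> R) e :
  gmul (fun s t mu => - Phi s t mu) e = - gmul Phi e.
Proof.
rewrite /gmul -sumrN; apply: eq_bigr=> m _; rewrite -sumrN; apply: eq_bigr=> a _.
rewrite -sumrN; apply: eq_bigr=> d _; rewrite -sumrN; apply: eq_bigr=> k _ /=.
by case: ifP; rewrite ?oppr0 // => _; rewrite !mulNr.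
Qed.

Lemma gmulB (Phi1 Phi2 : expo n -> expo n -> mi n -> R) e :
  gmul (fun s t mu => Phi1 s t mu - Phi2 s t mu) e = gmul Phi1 e - gmul Phi2 e.
Proof. by rewrite gmulD gmulN. Qed.

Lemma gmul_mem (S : R -> Prop) (Phi : expo n -> expo n -> mi n -> R) e :
  S 0 -> (forall x y, S x -> S y -> S (x + y)) -> (forall x k, S x -> S (x * k%:R)) ->
  (forall s t mu, relx e s t mu -> S (Phi s t mu)) -> S (gmul Phi e).
Proof.
move=> S0 SD SM H; rewrite /gmul.
apply: big_ind => // m _; apply: big_ind => // a _; apply: big_ind => // d _.
apply: big_ind => // k _ /=; case: ifP => // Hc.

by apply: (SM); apply: (SM); apply: H; apply: idx_relx.
Qed.

Lemma gmul_eq0 (Phi : expo n -> expo n -> mi n -> R) e :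
  (forall s t mu, relx e s t mu -> Phi s t mu = 0) -> gmul Phi e = 0.
Proof.
move=> H; apply: (@gmul_mem (fun x => x = 0)) => //.
- by move=> x y -> ->; rewrite addr0.
- by move=> x k ->; rewrite mul0r.
Qed.

Lemma gmul_nz (Phi : expo n -> expo n -> mi n -> R) e :
  gmul Phi e != 0 -> exists s t mu, relx e s t mu /\ Phi s t mu != 0.
Proof.
move=> /eqP H; apply: NNPP => Hn; apply: H; apply: gmul_eq0 => s t mu Hr.
apply/eqP; apply: NNPP => Hne; apply: Hn; exists s, t, mu; split=> //; exact/negP.
Qed.

Lemma big4_single (I1 I2 I3 I4 : finType) (F : I1 -> I2 -> I3 -> I4 -> R) x1 x2 x3 x4 :
  (forall y1 y2 y3 y4, F y1 y2 y3 y4 != 0 -> [/\ y1 = x1, y2 = x2, y3 = x3 & y4 = x4]) ->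
  \sum_y1 \sum_y2 \sum_y3 \sum_y4 F y1 y2 y3 y4 = F x1 x2 x3 x4.
Proof.
move=> H.
have Z y1 y2 y3 y4 : ~ [/\ y1 = x1, y2 = x2, y3 = x3 & y4 = x4] -> F y1 y2 y3 y4 = 0.
  move=> Hn; apply/eqP; apply: NNPP => /negP Hne; exact: Hn (H _ _ _ _ Hne).
have SS (I : finType) (G : I -> R) x : (forall y, y != x -> G y = 0) -> \sum_y G y = G x.
  by move=> HG; rewrite (bigD1 x) //= big1 ?addr0 // => y; exact: HG.
rewrite (SS _ _ x1); last first.
  move=> y1 Hy1; apply: big1 => y2 _; apply: big1 => y3 _; apply: big1 => y4 _.
  by apply: Z => -[E]; move: Hy1; rewrite E eqxx.
rewrite (SS _ _ x2); last first.
  move=> y2 Hy2; apply: big1 => y3 _; apply: big1 => y4 _.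
  by apply: Z => -[_ E]; move: Hy2; rewrite E eqxx.
rewrite (SS _ _ x3); last first.
  move=> y3 Hy3; apply: big1 => y4 _.
  by apply: Z => -[_ _ E]; move: Hy3; rewrite E eqxx.
rewrite (SS _ _ x4) //.
move=> y4 Hy4; by apply: Z => -[_ _ _ E]; move: Hy4; rewrite E eqxx.
Qed.

Lemma bval_inj B (a b : bnd n B) : bval a = bval b -> a = b.
Proof.
move=> H; apply/ffunP=> i; apply: val_inj; have := congr1 (fun f : mi n => f i) H.
by rewrite !ffunE.
Qed.

Lemma bval_inord B (v : mi n) : (forall i, v i <= B)%N ->
  bval ([ffun i => inord (v i)] : bnd n B) = v.
Proof. by move=> H; apply/ffunP=> i; rewrite !ffunE inordK // ltnS. Qed.

Lemma gmul_single (Phi : expo n -> expo n -> mi n -> R) e s0 t0 :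
  expo_add s0 t0 = e ->
  (forall s t mu, relx e s t mu -> Phi s t mu != 0 -> [/\ mu = mi0 n, s = s0 & t = t0]) ->
  gmul Phi e = Phi s0 t0 (mi0 n).
Proof.
move=> Est H.
set A := e.1.1; set D := e.1.2; set M := e.2.
have EA : A = mi_add s0.1.1 t0.1.1 by rewrite /A -Est.
have ED : D = mi_add s0.1.2 t0.1.2 by rewrite /D -Est.
have EM : M = (s0.2 + t0.2)%N by rewrite /M -Est.
set B := (M + mi_abs A + mi_abs D)%N.
have HbA i : (s0.1.1 i <= B)%N.
  have := mi_le_abs A i; rewrite {1}EA ffunE /B; lia.
have HbD i : (t0.1.2 i <= B)%N.
  have := mi_le_abs D i; rewrite {1}ED ffunE /B; lia.
pose m0 : bnd n B := [ffun i => inord 0].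
pose a0 : bnd n B := [ffun i => inord (s0.1.1 i)].
pose d0 : bnd n B := [ffun i => inord (t0.1.2 i)].
pose k0 : 'I_M.+1 := inord s0.2.
have Em0 : bval m0 = mi0 n.
  by apply/ffunP=> i; rewrite !ffunE inordK.
have Ea0 : bval a0 = s0.1.1 by apply: bval_inord.
have Ed0 : bval d0 = t0.1.2 by apply: bval_inord.
have Ek0 : nat_of_ord k0 = s0.2 by rewrite inordK // ltnS EM leq_addr.
rewrite /gmul -/A -/D -/M -/B (big4_single (x1 := m0) (x2 := a0) (x3 := d0) (x4 := k0)).
  rewrite /= Em0 Ea0 Ed0 Ek0 mi_abs0.
  have Hc0 : [&& mi_le s0.1.1 A, mi_le t0.1.2 D & (0 + s0.2 <= M)%N].
    apply/and3P; split.
    - by rewrite EA; apply/forallP=> i; rewrite ffunE leq_addr.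
    - by rewrite ED mi_le_addl.
    - by rewrite EM add0n leq_addr.
  rewrite Hc0.
  have -> : mi_add (mi_sub D t0.1.2) (mi0 n) = s0.1.2 by rewrite mi_add0 ED mi_addK.
  have -> : mi_add (mi_sub A s0.1.1) (mi0 n) = t0.1.1.
    by rewrite mi_add0 EA mi_addC mi_addK.
  have -> : (M - s0.2 - 0 = t0.2)%N by rewrite EM; lia.
  have -> : mi_binom s0.1.2 (mi0 n) = 1%N.
    by rewrite /mi_binom big1 // => i _; rewrite ffunE bin0.
  have -> : mi_ffact t0.1.1 (mi0 n) = 1%N.
    by rewrite /mi_ffact big1 // => i _; rewrite ffunE ffactn0.
  by rewrite !mulr1 -!surjective_pairing.
move=> m a d k /=; case: ifP => [Hc|_]; last by rewrite eqxx.
move=> Hnz.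
have Hphi : Phi (bval a, mi_add (mi_sub D (bval d)) (bval m), nat_of_ord k)
    (mi_add (mi_sub A (bval a)) (bval m), bval d, (M - k - mi_abs (bval m))%N) (bval m) != 0.
  by apply/eqP=> E; move: Hnz; rewrite E !mul0r eqxx.
have [Em Es Et] := H _ _ _ (idx_relx Hc) Hphi.
split.
- by apply: bval_inj; rewrite Em Em0.
- by apply: bval_inj; rewrite Ea0 -Es.
- by apply: bval_inj; rewrite Ed0 -Et.
- by apply: val_inj; rewrite /= Ek0 -Es.
Qed.

End Gmul.

Section Loc.
Variable C : idomainType.
Local Notation F := {fraction C}.
Local Notation "x %:F" := (@FracField.tofrac C x).
Variable Q : pred C.
Variable h : C.
Hypothesis pQ : prime_ideal Q.
Hypothesis hQ : h \notin Q.

Lemma Q0 : 0 \in Q. Proof. by case: pQ. Qed.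
Lemma QM a b : b \in Q -> a * b \in Q. Proof. by case: pQ => _ _ H _ _; apply: H. Qed.
Lemma QD a b : a \in Q -> b \in Q -> a + b \in Q. Proof. by case: pQ => _ H _ _ _; apply: H. Qed.
Lemma Qprime a b : a * b \in Q -> (a \in Q) \/ (b \in Q). Proof. by case: pQ => _ _ _ _ H; apply: H. Qed.

Lemma notQ0 a : a \notin Q -> a != 0.
Proof. by apply: contra => /eqP->; exact: Q0. Qed.
Lemma notQF a : a \notin Q -> a%:F != 0.
Proof. by move=> H; rewrite -tofrac0 tofrac_eq notQ0. Qed.

Lemma hXQ l : h ^+ l \notin Q.
Proof.
elim: l => [|l IH]; first by rewrite expr0; case: pQ.
rewrite exprS; apply/negP => /Qprime [H|H]; [by move: hQ; rewrite H | by move: IH; rewrite H].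
Qed.
Lemma hXF l : (h ^+ l)%:F != 0. Proof. exact: notQF (hXQ l). Qed.

Lemma locC_frac c : locC h c%:F.
Proof. by exists c, 0%N; rewrite expr0 tofrac1 divr1. Qed.
Lemma locC0 : locC h 0. Proof. by have := locC_frac 0; rewrite tofrac0. Qed.
Lemma locC_nat k : locC h k%:R.
Proof. by have := locC_frac k%:R; rewrite rmorph_nat. Qed.

Lemma locC_add x y : locC h x -> locC h y -> locC h (x + y).
Proof.
move=> [c1 [l1 ->]] [c2 [l2 ->]].
exists (c1 * h ^+ l2 + c2 * h ^+ l1), (l1 + l2)%N.
have H1 := hXF l1; have H2 := hXF l2.
by rewrite exprD addf_div // !tofracD !tofracM mulrC.
Qed.
Lemma locC_opp x : locC h x -> locC h (- x).
Proof. by move=> [c [l ->]]; exists (- c), l; rewrite tofracN mulNr. Qed.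
Lemma locC_mul x y : locC h x -> locC h y -> locC h (x * y).
Proof.
move=> [c1 [l1 ->]] [c2 [l2 ->]]; exists (c1 * c2), (l1 + l2)%N.
by rewrite exprD mulf_div !tofracM.
Qed.
Lemma locC_sub x y : locC h x -> locC h y -> locC h (x - y).
Proof. by move=> Hx Hy; apply: locC_add Hx (locC_opp Hy). Qed.

Lemma locQ0 : locQ Q h 0.
Proof. by exists 0, 0%N; rewrite tofrac0 mul0r; split=> //; exact: Q0. Qed.
Lemma locQ_add x y : locQ Q h x -> locQ Q h y -> locQ Q h (x + y).
Proof.
move=> [c1 [l1 [Hc1 ->]]] [c2 [l2 [Hc2 ->]]].
exists (c1 * h ^+ l2 + c2 * h ^+ l1), (l1 + l2)%N; split.
  by apply: QD; rewrite mulrC; apply: QM.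
have H1 := hXF l1; have H2 := hXF l2.
by rewrite exprD addf_div // !tofracD !tofracM mulrC.
Qed.
Lemma locQ_opp x : locQ Q h x -> locQ Q h (- x).
Proof.
move=> [c [l [Hc ->]]]; exists (- c), l; split; last by rewrite tofracN mulNr.
by rewrite -mulN1r; apply: QM.
Qed.
Lemma locQ_sub x y : locQ Q h x -> locQ Q h y -> locQ Q h (x - y).
Proof. by move=> Hx Hy; apply: locQ_add Hx (locQ_opp Hy). Qed.
Lemma locQ_mull x y : locC h x -> locQ Q h y -> locQ Q h (x * y).
Proof.
move=> [c1 [l1 ->]] [c2 [l2 [Hc2 ->]]]; exists (c1 * c2), (l1 + l2)%N; split.
  exact: QM.
by rewrite exprD mulf_div !tofracM.
Qed.
Lemma locQ_mulr x y : locQ Q h x -> locC h y -> locQ Q h (x * y).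
Proof. by move=> Hx Hy; rewrite mulrC; apply: locQ_mull. Qed.
Lemma locQ_locC x : locQ Q h x -> locC h x.
Proof. by move=> [c [l [_ ->]]]; exists c, l. Qed.

Lemma locCQQ x : locC h x -> locQQ Q x -> locQ Q h x.
Proof.
move=> [c [l Ex]] [a [a' [Ha Ha' Ex']]]; exists c, l; split=> //.
have Hh := hXF l; have Ha'F := notQF Ha'.
have E : (c * a')%:F = (a * h ^+ l)%:F.
  rewrite !tofracM; move: Ex'; rewrite Ex => /eqP.
  rewrite eqr_div // => /eqP ->; by rewrite mulrC.
have /eqP := E; rewrite tofrac_eq => /eqP E2.
have : c * a' \in Q by rewrite E2 mulrC; apply: QM.
by case/Qprime => // H; move: Ha'; rewrite H.
Qed.

Lemma lc_inv x c c' d : c' \notin Q -> c \notin Q -> h = c * d -> x = c%:F / c'%:F ->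
  x != 0 /\ locC h x^-1.
Proof.
move=> Hc' Hc Hh ->; have H1 := notQF Hc; have H2 := notQF Hc'.
split; first by rewrite mulf_neq0 // invr_eq0.
have Hd : d%:F != 0.
  have : h%:F != 0 by have := hXF 1; rewrite expr1.
  by rewrite Hh tofracM mulf_eq0 negb_or => /andP[_ ->].
exists (c' * d), 1%N; rewrite expr1 Hh !tofracM invf_div.
by rewrite -mulf_div divff // mulr1.
Qed.

End Loc.

Lemma simp4 (R : comRingType) (a b c : R) : a = b + c + (a - b - c).
Proof. ring. Qed.
Lemma simp5 (R : comRingType) (a b c d e : R) : a - (b + c + d) - e = (a - b - c - e) - d.
Proof. ring. Qed.
Lemma simp6 (R : comRingType) (a b c d : R) : a - b + (c - d) = (a + c) - (b + d).
Proof. ring. Qed.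
Lemma simp7 (R : comRingType) (p t t' : R) : (p - t) - (p - t') = t' - t.
Proof. ring. Qed.
Lemma simp8 (R : comRingType) (a b c d : R) : b + d = (a + b + c + d) - a - c.
Proof. ring. Qed.

Section Main.
Variable C : idomainType.
Local Notation F := {fraction C}.
Variable n : nat.
Variable lt : mi n * mi n -> mi n * mi n -> bool.
Variable Q : pred C.
Variable h : C.
Variable r : nat.
Variable g : 'I_r -> op F n.
Variable es : 'I_r -> expo n.
Hypothesis adm : admissible lt.
Hypothesis pQ : prime_ideal Q.
Hypothesis hQ : h \notin Q.
Hypothesis Hg : forall j, inD (locC h) (g j) /\ ~ inD (locQ Q h) (g j).
Hypothesis Hexp : forall j, is_expmodQ lt Q (g j) (es j).
Hypothesis Hlc : forall j, exists c c' : C,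
      [/\ c' \notin Q,
          g j (es j) = FracField.tofrac c / FracField.tofrac c'
        & exists d : C, h = c * d].

Notation hlt := (hlt lt).
Notation hle := (hle lt).
Notation LC := (locC h).
Notation LQ := (locQ Q h).

Lemma gloc j t : LC (g j t). Proof. by case: (Hg j) => [[_ H] _]; apply: H. Qed.

Lemma lc_facts j : g j (es j) != 0 /\ LC (g j (es j))^-1.
Proof.
have [c [c' [Hc' E [d Hd]]]] := Hlc j.
apply: (lc_inv pQ hQ Hc' _ Hd E).
apply/negP=> Hc; case: (Hexp j) => H _; apply: H; exists c, c'; split=> //.
Qed.

Lemma hle_anti e f : hle e f -> hle f e -> e = f.
Proof.
rewrite /hle => /orP[/eqP//|H1] /orP[/eqP//|H2].
by case: (hlt_asym adm H1 H2).
Qed.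

Lemma simp3 (R : zmodType) (a b c : R) : a + b + c - a - b = c.
Proof. by rewrite -(addrA a b c) (addrC a) addrK (addrC b) addrK. Qed.

Lemma hle_trans e f k : hle e f -> hle f k -> hle e k.
Proof.
move=> H1 /orP[/eqP<-//|H2]; rewrite /hle (hle_hlt_trans adm H1 H2); exact: orbT.
Qed.

Lemma LQ_sum (I : finType) (F0 : I -> F) : (forall i, LQ (F0 i)) -> LQ (\sum_i F0 i).
Proof.
move=> H; apply: big_ind => //; first exact: locQ0.
by move=> x y; apply: locQ_add.
Qed.
Lemma LC_sum (I : finType) (F0 : I -> F) : (forall i, LC (F0 i)) -> LC (\sum_i F0 i).
Proof.
move=> H; apply: big_ind => //; first exact: locC0.
by move=> x y; apply: (locC_add pQ hQ).
Qed.

Lemma LQ_gmul (Phi : expo n -> expo n -> mi n -> F) e :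
  (forall s t mu, relx e s t mu -> LQ (Phi s t mu)) -> LQ (gmul Phi e).
Proof.
apply: gmul_mem; first exact: locQ0.
- by move=> x y; apply: locQ_add.
- by move=> x k Hx; apply: locQ_mulr => //; apply: locC_nat.
Qed.
Lemma LC_gmul (Phi : expo n -> expo n -> mi n -> F) e :
  (forall s t mu, relx e s t mu -> LC (Phi s t mu)) -> LC (gmul Phi e).
Proof.
apply: gmul_mem; first exact: locC0.
- by move=> x y; apply: (locC_add pQ hQ).
- by move=> x k Hx; apply: locC_mul => //; apply: locC_nat.
Qed.

Definition Kpart (q : op F n) j e :=
  gmul (fun s t (_ : mi n) => if hlt e (expo_add s (es j)) then q s * g j t else 0) e.
Definition Lpart (q : op F n) j e :=
  if expo_le (es j) e then q (expo_sub e (es j)) * g j (es j) else 0.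

Lemma key (q : op F n) j e : (forall s, LC (q s)) ->
  LQ (op_mul q (g j) e - Kpart q j e - Lpart q j e).
Proof.
move=> Hq; rewrite op_mul_gmul /Kpart.
set ej := es j.
pose lead s t mu := (expo_add s ej == e) && (mu == mi0 n) && (t == ej).
pose Phi2 s t mu := if hlt e (expo_add s ej) then 0 else if lead s t mu then q s * g j t else 0.
pose Phi3 s t mu := if hlt e (expo_add s ej) then 0 else if lead s t mu then 0 else q s * g j t.
have Hsplit : gmul (fun s t (_ : mi n) => q s * g j t) e =
   gmul (fun s t (_ : mi n) => if hlt e (expo_add s ej) then q s * g j t else 0) e
   + gmul Phi2 e + gmul Phi3 e.
  rewrite -!gmulD; apply: gmul_ext => s t mu _; rewrite /Phi2 /Phi3.
  by case: (hlt e (expo_add s ej)); case: (lead s t mu); rewrite ?addr0 ?add0r.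
have H2 : gmul Phi2 e = Lpart q j e.
  rewrite /Lpart -/ej; case: ifP => Hle.
    rewrite (@gmul_single _ _ _ _ (expo_sub e ej) ej); first by rewrite /Phi2 /lead expo_subK // !eqxx (negbTE (hlt_irr adm e)).
      exact: expo_subK.
    move=> s t mu _; rewrite /Phi2 /lead; case: ifP => _; first by rewrite eqxx.
    case: ifP; last by rewrite eqxx.
    by move=> /andP[/andP[/eqP <- /eqP ->] /eqP ->] _; rewrite expo_addK.
  apply: gmul_eq0 => s t mu _; rewrite /Phi2 /lead; case: ifP => // _; case: ifP => // /andP[/andP[/eqP Es _] _].
  by move: Hle; rewrite -Es expo_le_add.
have H3 : LQ (gmul Phi3 e).
  apply: LQ_gmul => s t mu [Est Hmu]; rewrite /Phi3.
  case: ifP => Hlt; first exact: locQ0.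
  case: ifP => Hlead; first exact: locQ0.
  apply: (locQ_mull pQ (Hq s)).
  apply: (locCQQ pQ hQ (gloc j t)); apply: NNPP => Hn.
  have Hte : hle t ej by case: (Hexp j) => _; apply.
  have H1 : hle (expo_add s t) (expo_add s ej).
    by rewrite ![expo_add s _]expo_addC; apply: hle_add.
  have H0 : hle e (expo_add s t) by rewrite Est; apply: hle_shift.
  have Ee : expo_add s ej = e.
    apply: hle_anti; last exact: (hle_trans H0 H1).
    rewrite /hle; case: (eqVneq (expo_add s ej) e) => //= Hne.
    case: (hlt_total adm (elimN eqP Hne)) => // H; by rewrite H in Hlt.
  have Est' : expo_add s t = e by apply: hle_anti => //; rewrite -Ee.
  move: Hlead; rewrite /lead Ee eqxx /=.
  case: (eqVneq mu (mi0 n)) => [_|/eqP Hmu0] /=; last first.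
    move: (hlt_shift adm Hmu Hmu0); rewrite -Est Est' => H; by move: (hlt_irr adm e); rewrite H.
  case: (eqVneq t ej) => // /eqP Htne _.
  have Htl : hlt t ej by move: Hte; rewrite /hle => /orP[/eqP//|].
  move: (hlt_add adm s Htl); rewrite ![expo_add _ s]expo_addC Ee Est' => H.
  by move: (hlt_irr adm e); rewrite H.
rewrite Hsplit H2 simp3; exact: H3.
Qed.

Definition cls (e : expo n) : option 'I_r :=
  [pick j | expo_le (es j) e && [forall k : 'I_r, (k < j)%N ==> ~~ expo_le (es k) e]].

Lemma cls_some e j : cls e = Some j -> inDelta es j e.
Proof.
rewrite /cls; case: pickP => // j' /andP[H1 /forallP H2] [<-]; split=> // k Hk.
exact: (implyP (H2 k) Hk).
Qed.

Lemma cls_none e : cls e = None -> inDeltabar es e.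
Proof.
rewrite /cls; case: pickP => // H _ k; apply/negP => Hk.
have Hex : exists m, [exists k' : 'I_r, (k' == m :> nat) && expo_le (es k') e].
  by exists k; apply/existsP; exists k; rewrite eqxx Hk.
case: (ex_minnP Hex) => m /existsP[k0 /andP[/eqP Ek0 Hk0]] Hmin.
move: (H k0); rewrite Hk0 /= => /negP; apply; apply/forallP=> k1; apply/implyP=> Hlt.
apply/negP=> Hk1.
have : (m <= k1)%N by apply: Hmin; apply/existsP; exists k1; rewrite eqxx Hk1.
by rewrite -Ek0 leqNgt Hlt.
Qed.

Lemma inDelta_uniq j k e : inDelta es j e -> inDelta es k e -> j = k.
Proof.
move=> [Hj Hj'] [Hk Hk']; apply: val_inj => /=.
case: (ltngtP j k) => // H.
- by move: (Hk' j H); rewrite Hj.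
- by move: (Hj' k H); rewrite Hk.
Qed.

Lemma inDelta_bar j e : inDelta es j e -> inDeltabar es e -> False.
Proof. by move=> [Hj _] Hb; move: (Hb j); rewrite Hj. Qed.

Lemma fix_exists (T : Type) (R0 : T -> T -> Prop) (wf : well_founded R0)
    (B : (T -> F) -> T -> F) :
  (forall v1 v2 x, (forall y, R0 y x -> v1 y = v2 y) -> B v1 x = B v2 x) ->
  exists V, forall x, V x = B V x.
Proof.
move=> Hloc.
pose wrap x (rec : forall y, R0 y x -> F) y :=
  match excluded_middle_informative (R0 y x) with left H => rec y H | right _ => 0 end.
pose step x (rec : forall y, R0 y x -> F) := B (wrap x rec) x.
exists (Fix wf (fun _ => F) step) => x.
rewrite Fix_eq.
  rewrite /step; apply: Hloc => y Hy; rewrite /wrap.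
  by case: excluded_middle_informative.
move=> x0 f1 f2 Hf; rewrite /step; apply: Hloc => y Hy; rewrite /wrap.
by case: excluded_middle_informative.
Qed.

Section Exist.
Variable P : op F n.
Variable N : nat.
Hypothesis HPN : forall e, P e != 0 -> (deg e <= N)%N.
Hypothesis HPC : forall e, LC (P e).

Definition qv (v : expo n -> F) j s :=
  if (cls (expo_add s (es j)) == Some j) && (deg (expo_add s (es j)) <= N)%N
  then v (expo_add s (es j)) else 0.
Definition Kv v e := \sum_j Kpart (qv v j) j e.
Definition body v e :=
  if (deg e <= N)%N then
    (if cls e is Some j then (P e - Kv v e) * (g j (es j))^-1 else P e - Kv v e)
  else 0.

Lemma body_loc v1 v2 e :
  (forall y, (hlt e y /\ (deg y <= N)%N) -> v1 y = v2 y) -> body v1 e = body v2 e.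
Proof.
move=> H; rewrite /body /Kv.
suff -> : \sum_j Kpart (qv v1 j) j e = \sum_j Kpart (qv v2 j) j e by [].
apply: eq_bigr => j _; apply: gmul_ext => s t mu _.
case: ifP => // Hl; rewrite /qv; case: ifP => // /andP[_ Hd].
by rewrite H.
Qed.

Lemma exists_V : exists V, forall e, V e = body V e.
Proof.
apply: (fix_exists (wf_bounded adm N)) => v1 v2 x Hy; exact: body_loc.
Qed.

Variable V : expo n -> F.
Hypothesis HV : forall e, V e = body V e.

Lemma V_big e : (N < deg e)%N -> V e = 0.
Proof. by move=> H; rewrite HV /body leqNgt H. Qed.

Lemma Kv_big e : (N < deg e)%N -> Kv V e = 0.
Proof.
move=> H; rewrite /Kv big1 // => j _; apply: gmul_eq0 => s t mu _.
case: ifP => // Hl; rewrite /qv; case: ifP => [/andP[_ Hd]|]; last by rewrite mul0r.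
by have := hlt_deg Hl; lia.
Qed.

Lemma V_loc e : LC (V e).
Proof.
elim/(well_founded_ind (wf_bounded adm N)): e => e IH.
rewrite HV /body; case: ifP => Hd; last exact: locC0.
have HK : LC (Kv V e).
  apply: LC_sum => j; apply: LC_gmul => s t mu _.
  case: ifP => Hl; last exact: locC0.
  apply: locC_mul; last exact: gloc.
  rewrite /qv; case: ifP => [/andP[_ Hd']|_]; last exact: locC0.
  by apply: IH.
case: (cls e) => [j|]; last exact: (locC_sub pQ hQ (HPC e) HK).
apply: locC_mul; first exact: (locC_sub pQ hQ (HPC e) HK).
by case: (lc_facts j).
Qed.

Definition qq j := qv V j.
Definition RR e := if cls e is None then V e else 0.
Definition TT e := P e - \sum_j op_mul (qq j) (g j) e - RR e.

Lemma qq_loc j s : LC (qq j s).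
Proof. rewrite /qq /qv; case: ifP => _; [exact: V_loc | exact: locC0]. Qed.

Lemma Lsum e : \sum_j Lpart (qq j) j e =
  if (deg e <= N)%N then (if cls e is Some j then V e * g j (es j) else 0) else 0.
Proof.
have Hnz j : Lpart (qq j) j e != 0 ->
    [/\ cls e = Some j, (deg e <= N)%N & Lpart (qq j) j e = V e * g j (es j)].
  rewrite /Lpart; case: ifP => Hle; last by rewrite eqxx.
  rewrite /qq /qv expo_subK //; case: ifP; last by rewrite mul0r eqxx.
  by case/andP => /eqP -> ->.
case: ifP => Hd; last first.
  apply: big1 => j _; apply/eqP; apply: NNPP => /negP Hn.
  by case: (Hnz j Hn) => _; rewrite Hd.
case Ec: (cls e) => [j0|].
  rewrite (bigD1 j0) //= big1 ?addr0.
    have [Hle _] := cls_some Ec.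
    by rewrite /Lpart Hle /qq /qv expo_subK // Ec eqxx Hd.
  move=> j Hj; apply/eqP; apply: NNPP => /negP Hn.
  by case: (Hnz j Hn); rewrite Ec => -[E]; move: Hj; rewrite E eqxx.
apply: big1 => j _; apply/eqP; apply: NNPP => /negP Hn.
by case: (Hnz j Hn); rewrite Ec.
Qed.

Lemma TT_loc e : LQ (TT e).
Proof.
pose Z j := op_mul (qq j) (g j) e - Kpart (qq j) j e - Lpart (qq j) j e.
have HZ : LQ (\sum_j Z j) by apply: LQ_sum => j; apply: key; apply: qq_loc.
have Hsum : \sum_j op_mul (qq j) (g j) e =
    Kv V e + \sum_j Lpart (qq j) j e + \sum_j Z j.
  rewrite /Kv -!big_split; apply: eq_bigr => j _ /=.
  by rewrite /Z -simp4.
have -> : TT e = (P e - Kv V e - \sum_j Lpart (qq j) j e - RR e) - \sum_j Z j.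
  by rewrite /TT Hsum simp5.
suff -> : P e - Kv V e - \sum_j Lpart (qq j) j e - RR e = 0.
  by rewrite sub0r; apply: locQ_opp.
rewrite Lsum /RR; case: ifP => Hd; last first.
  have Hd' : (N < deg e)%N by rewrite ltnNge Hd.
  have HP0 : P e = 0 by apply/eqP; apply: NNPP => /negP /HPN; rewrite Hd.
  rewrite HP0 Kv_big // V_big //; by case: (cls e); rewrite !subrr.
case Ec: (cls e) => [j|].
  rewrite HV /body Hd Ec -mulrA mulVf; last by case: (lc_facts j).
  by rewrite mulr1 subrr subr0.
by rewrite HV /body Hd Ec subr0 subrr.
Qed.

Lemma g_bound : exists NG, forall j e, g j e != 0 -> (deg e <= NG)%N.
Proof.
pose Nj j := proj1_sig (constructive_indefinite_description _ ((Hg j).1.1)).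
exists (\max_j Nj j) => j e He; apply: leq_trans (leq_bigmax j).
rewrite /Nj; case: constructive_indefinite_description => /= M HM; exact: HM.
Qed.

Lemma qq_bound j s : qq j s != 0 -> (deg s <= N)%N.
Proof.
rewrite /qq /qv; case: ifP => [/andP[_ Hd] _|]; last by rewrite eqxx.
by move: Hd; rewrite deg_add; lia.
Qed.

Lemma RR_bound e : RR e != 0 -> (deg e <= N)%N.
Proof.
rewrite /RR; case: (cls e) => [_|]; first by rewrite eqxx.
by move=> H; rewrite leqNgt; apply/negP => /V_big E; move: H; rewrite E eqxx.
Qed.

Lemma TT_bound NG : (forall j e, g j e != 0 -> (deg e <= NG)%N) ->
  forall e, TT e != 0 -> (deg e <= N + NG)%N.
Proof.
move=> HNG e H; rewrite leqNgt; apply/negP => Hd; move: H; apply/negP; rewrite negbK.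
have HP0 : P e = 0 by apply/eqP; apply: NNPP => /negP /HPN; lia.
have HR0 : RR e = 0 by apply/eqP; apply: NNPP => /negP /RR_bound; lia.
rewrite /TT HP0 HR0 big1 ?subrr // => j _; rewrite op_mul_gmul; apply: gmul_eq0 => s t mu [Est Hmu].
have Hdeg : deg e = (deg s + deg t)%N by rewrite -deg_add Est deg_shift.
case: (eqVneq (qq j s) 0) => [->|Hq]; first by rewrite mul0r.
case: (eqVneq (g j t) 0) => [->|Hgt]; first by rewrite mulr0.
have := qq_bound Hq; have := HNG _ _ Hgt; lia.
Qed.

Lemma div_exists : exists q R T, division_data Q h g es P q R T.
Proof.
have [NG HNG] := g_bound.
have Hq j : exists N0, forall s, qq j s != 0 -> (mi_abs s.1.2 + s.2 <= N0)%N.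
  by exists N => s; apply: qq_bound.
have HR : exists N0, forall s, RR s != 0 -> (mi_abs s.1.2 + s.2 <= N0)%N.
  by exists N => s; apply: RR_bound.
have HT : exists N0, forall s, TT s != 0 -> (mi_abs s.1.2 + s.2 <= N0)%N.
  by exists (N + NG)%N => s; apply: TT_bound.
exists qq, RR, TT; split.
- by split; [move=> j; split | split; split].
- by move=> e; rewrite /TT -simp4.
- move=> j s; rewrite /Supp /qq /qv; case: ifP => [/andP[/eqP E _] _|]; last by rewrite eqxx.
  exact: cls_some.
- move=> s; rewrite /Supp /RR; case E: (cls s) => [j|]; first by rewrite eqxx.
  by move=> _; apply: cls_none.
- split.
  + by move=> j; split=> // s; apply: qq_loc.
  + split=> // s; rewrite /RR; case: (cls s) => [_|]; [exact: locC0 | exact: V_loc].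
  + by split=> // s; apply: TT_loc.
Qed.

End Exist.

Lemma fam_bound (I : finType) (f : I -> op F n) :
  (forall j, exists N0, forall e, f j e != 0 -> (mi_abs e.1.2 + e.2 <= N0)%N) ->
  exists N0, forall j e, f j e != 0 -> (deg e <= N0)%N.
Proof.
move=> H.
pose Nj j := proj1_sig (constructive_indefinite_description _ (H j)).
exists (\max_j Nj j) => j e He; apply: leq_trans (leq_bigmax j).
rewrite /Nj; case: constructive_indefinite_description => /= M HM; exact: HM.
Qed.

Lemma div_unique P q R T q' R' T' :
  division_data Q h g es P q R T -> division_data Q h g es P q' R' T' ->
  (forall j, inD LQ (op_sub (q j) (q' j))) /\ inD LQ (op_sub R R').
Proof.
move=> [[Hqb [HRb HTb]] Ho Hi Hii [Hql HRl HTl]].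
move=> [[Hqb' [HRb' HTb']] Ho' Hi' Hii' [Hql' HRl' HTl']].
pose D j s := q j s - q' j s.
pose E e := R e - R' e.
have Dloc j s : LC (D j s) by apply: (locC_sub pQ hQ); [apply: (Hql j).2 | apply: (Hql' j).2].
have Eloc e : LC (E e) by apply: (locC_sub pQ hQ); [apply: HRl.2 | apply: HRl'.2].
have Dsupp j s : D j s != 0 -> inDelta es j (expo_add s (es j)).
  rewrite /D; case: (eqVneq (q j s) 0) => [Hq0|Hq0] Hne; last exact: Hi.
  apply: Hi'; rewrite /Supp; apply/eqP => E0; move: Hne; by rewrite Hq0 E0 subrr eqxx.
have Esupp e : E e != 0 -> inDeltabar es e.
  rewrite /E; case: (eqVneq (R e) 0) => [Hr0|Hr0] Hne; last exact: Hii.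
  apply: Hii'; rewrite /Supp; apply/eqP => E0; move: Hne; by rewrite Hr0 E0 subrr eqxx.
have Heq e : LQ (\sum_j gmul (fun s t (_ : mi n) => D j s * g j t) e + E e).
  have -> : \sum_j gmul (fun s t (_ : mi n) => D j s * g j t) e =
            \sum_j op_mul (q j) (g j) e - \sum_j op_mul (q' j) (g j) e.
    rewrite -sumrB; apply: eq_bigr => j _; rewrite !op_mul_gmul -gmulB.
    by apply: gmul_ext => s t mu _; rewrite /D mulrBl.
  rewrite /E simp6.
  have -> : \sum_j op_mul (q j) (g j) e + R e = P e - T e by rewrite (Ho e) addrK.
  have -> : \sum_j op_mul (q' j) (g j) e + R' e = P e - T' e by rewrite (Ho' e) addrK.
  by rewrite simp7; apply: (locQ_sub pQ hQ); [apply: HTl'.2 | apply: HTl.2].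
have [Nq HNq] := fam_bound (fun j => (Hqb j).1).
have [Nq' HNq'] := fam_bound (fun j => (Hqb' j).1).
have [NR HNR] := fam_bound (f := fun _ : 'I_1 => R) (fun _ => HRb.1).
have [NR' HNR'] := fam_bound (f := fun _ : 'I_1 => R') (fun _ => HRb'.1).
pose NE := \max_j deg (es j).
have Dbound j s : D j s != 0 -> (deg s <= Nq + Nq')%N.
  rewrite /D; case: (eqVneq (q j s) 0) => [Hq0|Hq0] Hne.
    have : q' j s != 0 by apply/eqP => E0; move: Hne; rewrite Hq0 E0 subrr eqxx.
    by move/HNq'; lia.
  by have := HNq _ _ Hq0; lia.
have Ebound e : E e != 0 -> (deg e <= NR + NR')%N.
  rewrite /E; case: (eqVneq (R e) 0) => [Hr0|Hr0] Hne.
    have : R' e != 0 by apply/eqP => E0; move: Hne; rewrite Hr0 E0 subrr eqxx.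
    by move/(HNR' ord0); lia.
  by have := HNR ord0 _ Hr0; lia.
pose Bad e := (exists j s, expo_add s (es j) = e /\ ~ LQ (D j s)) \/ ~ LQ (E e).
have Badb e : Bad e -> (deg e <= Nq + Nq' + NE + (NR + NR'))%N.
  case=> [[j [s [Es HD]]]|HE].
    have Hne : D j s != 0 by apply/eqP => E0; apply: HD; rewrite E0; exact: locQ0.
    have := Dbound _ _ Hne; have := @leq_bigmax _ (fun j => deg (es j)) j.
    rewrite -/NE -Es deg_add; lia.
  have Hne : E e != 0 by apply/eqP => E0; apply: HE; rewrite E0; exact: locQ0.
  have := Ebound _ Hne; lia.
have NoBad : forall e, ~ Bad e.
  move=> e0 Be0.
  have [e [Be Hmax]] := exists_max adm Badb Be0.
  have HK j : LQ (Kpart (D j) j e).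
    apply: LQ_gmul => s t mu _; case: ifP => Hl; last exact: locQ0.
    apply: (locQ_mulr pQ _ (gloc j t)); apply: NNPP => HD.
    have : Bad (expo_add s (es j)) by left; exists j, s.
    by move/Hmax; rewrite Hl.
  have HZ j : LQ (op_mul (D j) (g j) e - Kpart (D j) j e - Lpart (D j) j e).
    by apply: key.
  have HLE : LQ (\sum_j Lpart (D j) j e + E e).
    rewrite (simp8 (\sum_j Kpart (D j) j e) _ (\sum_j (op_mul (D j) (g j) e - Kpart (D j) j e - Lpart (D j) j e))).
    apply: (locQ_sub pQ hQ); last exact: LQ_sum.
    apply: (locQ_sub pQ hQ); last exact: LQ_sum.
    suff -> : \sum_j Kpart (D j) j e + \sum_j Lpart (D j) j e +
       \sum_j (op_mul (D j) (g j) e - Kpart (D j) j e - Lpart (D j) j e) =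
       \sum_j gmul (fun s t (_ : mi n) => D j s * g j t) e by apply: Heq.
    rewrite -!big_split; apply: eq_bigr => j _ /=; by rewrite -simp4.
  have Lsupp j : Lpart (D j) j e != 0 -> inDelta es j e.
    rewrite /Lpart; case: ifP => Hle; last by rewrite eqxx.
    move=> Hne; have : D j (expo_sub e (es j)) != 0.
      by apply/eqP => E0; move: Hne; rewrite E0 mul0r eqxx.
    by move/Dsupp; rewrite expo_subK.
  case: Be => [[j0 [s [Es HD]]]|HE].
    have Hne : D j0 s != 0 by apply/eqP => E0; apply: HD; rewrite E0; exact: locQ0.
    have HDe : inDelta es j0 e by rewrite -Es; apply: Dsupp.
    have HE0 : E e = 0.
      by apply/eqP; apply: NNPP => /negP /Esupp Hb; apply: (inDelta_bar HDe Hb).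
    move: HLE; rewrite HE0 addr0 (bigD1 j0) //= big1 ?addr0; last first.
      move=> j Hj; apply/eqP; apply: NNPP => /negP /Lsupp Hd.
      by move: Hj; rewrite (inDelta_uniq Hd HDe) eqxx.
    rewrite /Lpart -Es expo_le_add expo_addK => HL; apply: HD.
    have [Hlc0 Hlci] := lc_facts j0.
    rewrite -(mulfK Hlc0 (D j0 s)); exact: (locQ_mulr pQ HL Hlci).
  have Hne : E e != 0 by apply/eqP => E0; apply: HE; rewrite E0; exact: locQ0.
  have Hb := Esupp _ Hne.
  move: HLE; rewrite big1 ?add0r //.
  move=> j _; apply/eqP; apply: NNPP => /negP /Lsupp Hd; exact: inDelta_bar Hd Hb.
split.
- move=> j; split.
    exists (Nq + Nq')%N; move=> s Hs; exact: (Dbound j s Hs).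
  move=> s; apply: NNPP => HD; apply: (NoBad (expo_add s (es j))); left; by exists j, s.
- split.
    exists (NR + NR')%N; move=> s Hs; exact: (Ebound s Hs).
  move=> s; apply: NNPP => HE; apply: (NoBad s); by right.
Qed.
End Main.

Theorem mainTheorem3 (C : idomainType) (n : nat)
    (lt : mi n * mi n -> mi n * mi n -> bool)
    (Q : pred C) (h : C) (r : nat)
    (g : 'I_r -> op {fraction C} n) (es : 'I_r -> expo n) :
  no_int_in_primes C ->
  admissible lt ->
  prime_ideal Q ->
  h \notin Q ->
  (forall j, inD (locC h) (g j) /\ ~ inD (locQ Q h) (g j)) ->
  (* es j = exp^{mod Q}(g j) *)
  (forall j, is_expmodQ lt Q (g j) (es j)) ->
  (* the numerator of lc^{mod Q}(g j) divides h in C *)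
  (forall j, exists c c' : C,
      [/\ c' \notin Q,
          g j (es j) = FracField.tofrac c / FracField.tofrac c'
        & exists d : C, h = c * d]) ->
  forall P : op {fraction C} n, inD (locC h) P ->
    (exists q R T, division_data Q h g es P q R T) /\
    (forall q R T q' R' T',
        division_data Q h g es P q R T ->
        division_data Q h g es P q' R' T' ->
        (forall j, inD (locQ Q h) (op_sub (q j) (q' j)))
        /\ inD (locQ Q h) (op_sub R R')).
Proof.
move=> _ adm pQ hQ Hg Hexp Hlc P [[N HN] HPC].
split.
- have [V HV] := exists_V g es adm P N.
  exact: (div_exists adm pQ hQ Hg Hexp Hlc HN HPC HV).
- move=> q R T q' R' T' H1 H2; exact: (div_unique adm pQ hQ Hg Hexp Hlc H1 H2).
Qed.
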